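(* Let $g:[0,1)\to\mathbb{R}$ be the function defined in the context. Then $g$ attains its maximum on $[0,1)$, i.e. there exists $a^*\in[0,1)$ with $g(a^* )=\sup_{a\in[0,1)}g(a)$.
   Context: Fix $P>0$, $y_H>y_L\ge 0$, a real number $u$ and $\gamma\in(0,1]$. Let $C:[0,1)\to\mathbb{R}$ satisfy $C(0)=0$, $C$ increasing, strictly convex, twice differentiable, $C(a)\to\infty$ as $a\to1$. Let $\eta:[0,\infty)\to\mathbb{R}$ be strictly convex, increasing, twice differentiable with $\eta(0)=0$, and let $\beta\ge0$ satisfy $\gamma\eta'(\beta)=1$ (assumed to exist). For $a\in[0,1)$ define $w_L^*(a)=\max\{0,u-aC'(a)+C(a)\}$, $w_H^*(a)=w_L^*(a)+C'(a)$, $b_i^*(a)=\min\{\beta,w_i^*(a)\}$ for $i\in\{H,L\}$, and $g(a)=a\,(Py_H-w_H^*(a)+b_H^*(a)-\gamma\eta(b_H^*(a)))+(1-a)\,(Py_L-w_L^*(a)+b_L^*(a)-\gamma\eta(b_L^*(a)))$. (These are the optimal wages and thefts inducing effort $a$ in the one-shot wage-theft principal–agent problem, and $g(a)$ is the employer's resulting profit.) *)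

(* Defs.v *)
From Stdlib Require Import Reals Lra.
Open Scope R_scope.

(* The effort domain [0,1) and the theft domain [0,oo). *)
Definition dom01 (a : R) : Prop := 0 <= a < 1.
Definition domNN (b : R) : Prop := 0 <= b.

(* f' is the derivative of f relative to the set D at every point of D
   (one-sided at a boundary point such as 0): the difference quotient
   (f x - f a)/(x - a), for x in D, x <> a, tends to f' a as x -> a. *)
Definition deriv_on (D : R -> Prop) (f f' : R -> R) : Prop :=
  forall a, D a ->
    limit1_in (fun x => (f x - f a) / (x - a)) (fun x => D x /\ x <> a) (f' a) a.

Definition strictly_increasing_on (D : R -> Prop) (f : R -> R) : Prop :=
  forall x y, D x -> D y -> x < y -> f x < f y.

Definition strictly_convex_on (D : R -> Prop) (f : R -> R) : Prop :=
  forall x y t, D x -> D y -> x <> y -> 0 < t < 1 ->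
    f (t * x + (1 - t) * y) < t * f x + (1 - t) * f y.

Definition tends_to_infty_at_1 (C : R -> R) : Prop :=
  forall M, exists d, 0 < d /\ forall a, 1 - d < a < 1 -> M < C a.

(* Optimal wages, thefts and the employer's profit g(a); dC stands for C'. *)
Definition wL (u : R) (C dC : R -> R) (a : R) : R :=
  Rmax 0 (u - a * dC a + C a).
Definition wH (u : R) (C dC : R -> R) (a : R) : R := wL u C dC a + dC a.
Definition bL (beta u : R) (C dC : R -> R) (a : R) : R := Rmin beta (wL u C dC a).
Definition bH (beta u : R) (C dC : R -> R) (a : R) : R := Rmin beta (wH u C dC a).

Definition g (P yH yL u gamma beta : R) (C dC eta : R -> R) (a : R) : R :=
  a * (P * yH - wH u C dC a + bH beta u C dC a - gamma * eta (bH beta u C dC a))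
  + (1 - a) * (P * yL - wL u C dC a + bL beta u C dC a
               - gamma * eta (bL beta u C dC a)).

(* Main.v *)
Require Import Defs.
From Stdlib Require Import Reals Lra.
Open Scope R_scope.


Lemma lim_unfold f D l x0 : limit1_in f D l x0 <->
  forall eps, 0 < eps -> exists del, 0 < del /\
   forall x, D x -> Rabs (x - x0) < del -> Rabs (f x - l) < eps.
Proof.
  unfold limit1_in, limit_in; simpl; unfold Rdist; split.
  - intros H eps He; destruct (H eps He) as [d [Hd H']]; exists d; split; auto.
  - intros H eps He; destruct (H eps He) as [d [Hd H']]; exists d; split; auto.
    intros x [? ?]; auto.
Qed.

Lemma lim_to f D l x0 : limit1_in f D l x0 ->
  forall eps, 0 < eps -> exists del, 0 < del /\
   forall x, D x -> Rabs (x - x0) < del -> Rabs (f x - l) < eps.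
Proof. apply lim_unfold. Qed.
Lemma lim_from f D l x0 : 
  (forall eps, 0 < eps -> exists del, 0 < del /\
   forall x, D x -> Rabs (x - x0) < del -> Rabs (f x - l) < eps) -> limit1_in f D l x0.
Proof. apply lim_unfold. Qed.

Lemma lim_weaken f D D' l x0 : (forall x, D' x -> D x) ->
  limit1_in f D l x0 -> limit1_in f D' l x0.
Proof.
  intros HD H; apply lim_from; generalize (lim_to _ _ _ _ H); clear H; intro H.
  intros eps He; destruct (H eps He) as [d [Hd H']]; exists d; split; auto.
Qed.

Lemma lim_ext f f' D l x0 : (forall x, D x -> f x = f' x) ->
  limit1_in f D l x0 -> limit1_in f' D l x0.
Proof.
  intros HD H; apply lim_from; generalize (lim_to _ _ _ _ H); clear H; intro H.
  intros eps He; destruct (H eps He) as [d [Hd H']]; exists d; split; auto.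
  intros x Dx Hx; rewrite <- HD; auto.
Qed.

Lemma lim_id D x0 : limit1_in (fun x => x) D x0 x0.
Proof.
  apply lim_from; intros eps He; exists eps; split; auto.
Qed.

Lemma lim_ge f D l x0 m :
  limit1_in f D l x0 ->
  (forall del, 0 < del -> exists x, D x /\ Rabs (x - x0) < del /\ m <= f x) ->
  m <= l.
Proof.
  intros H Hp; generalize (lim_to _ _ _ _ H); clear H; intro H.
  destruct (Rle_or_lt m l) as [|Hlt]; auto.
  destruct (H (m - l)) as [d [Hd H']]; [lra|].
  destruct (Hp d Hd) as [x [Dx [Hx Hm]]].
  specialize (H' x Dx Hx). apply Rabs_def2 in H'. lra.
Qed.

Lemma lim_addpoint f D a :
  limit1_in f (fun x => D x /\ x <> a) (f a) a -> limit1_in f D (f a) a.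
Proof.
  intros H; apply lim_from; generalize (lim_to _ _ _ _ H); clear H; intro H.
  intros eps He; destruct (H eps He) as [d [Hd H']]; exists d; split; auto.
  intros x Dx Hx. destruct (Req_dec x a) as [->|Hne].
  - rewrite Rminus_diag, Rabs_R0; auto.
  - auto.
Qed.

Lemma Rmax_lip a b c d : Rabs (Rmax a b - Rmax c d) <= Rabs (a - c) + Rabs (b - d).
Proof. unfold Rmax; repeat destruct Rle_dec; unfold Rabs; repeat destruct Rcase_abs; lra. Qed.
Lemma Rmin_lip a b c d : Rabs (Rmin a b - Rmin c d) <= Rabs (a - c) + Rabs (b - d).
Proof. unfold Rmin; repeat destruct Rle_dec; unfold Rabs; repeat destruct Rcase_abs; lra. Qed.

Lemma lim_lip2 (F : R -> R -> R) f g D l l' x0 :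
  (forall a b c d, Rabs (F a b - F c d) <= Rabs (a - c) + Rabs (b - d)) ->
  limit1_in f D l x0 -> limit1_in g D l' x0 ->
  limit1_in (fun x => F (f x) (g x)) D (F l l') x0.
Proof.
  intros HF H1 H2; apply lim_from; generalize (lim_to _ _ _ _ H1); clear H1; intro H1; generalize (lim_to _ _ _ _ H2); clear H2; intro H2.
  intros eps He.
  destruct (H1 (eps/2)) as [d1 [Hd1 H1']]; [lra|].
  destruct (H2 (eps/2)) as [d2 [Hd2 H2']]; [lra|].
  exists (Rmin d1 d2); split; [apply Rmin_glb_lt; auto|].
  intros x Dx Hx.
  assert (Rabs (x - x0) < d1) by (generalize (Rmin_l d1 d2); lra).
  assert (Rabs (x - x0) < d2) by (generalize (Rmin_r d1 d2); lra).
  specialize (H1' x Dx H). specialize (H2' x Dx H0).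
  specialize (HF (f x) (g x) l l'). lra.
Qed.

Lemma lim_max f g D l l' x0 :
  limit1_in f D l x0 -> limit1_in g D l' x0 ->
  limit1_in (fun x => Rmax (f x) (g x)) D (Rmax l l') x0.
Proof. apply lim_lip2, Rmax_lip. Qed.
Lemma lim_min f g D l l' x0 :
  limit1_in f D l x0 -> limit1_in g D l' x0 ->
  limit1_in (fun x => Rmin (f x) (g x)) D (Rmin l l') x0.
Proof. apply lim_lip2, Rmin_lip. Qed.

Lemma lim_const D c x0 : limit1_in (fun _ => c) D c x0.
Proof. apply lim_from; intros eps He; exists 1; split; [lra|].
  intros; rewrite Rminus_diag, Rabs_R0; auto. Qed.

Lemma ctn_of_deriv D f f' a : deriv_on D f f' -> D a -> limit1_in f D (f a) a.
Proof.
  intros Hd Da. apply lim_addpoint.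
  specialize (Hd a Da).
  assert (H := limit_mul _ _ _ _ _ _ Hd (limit_minus _ _ _ _ _ _ (lim_id (fun x => D x /\ x <> a) a) (lim_const (fun x => D x /\ x <> a) a a))).
  assert (H2 := limit_plus _ _ _ _ _ _ H (lim_const (fun x => D x /\ x <> a) (f a) a)).
  replace (f' a * (a - a) + f a) with (f a) in H2 by ring.
  eapply lim_ext; [|exact H2]. intros x [Dx Hx]. simpl. field.
  intro; apply Hx; lra.
Qed.


Theorem proposition3
  (P yH yL u gamma beta : R) (C dC ddC eta deta ddeta : R -> R)
  (HP : 0 < P) (HyL : 0 <= yL) (HyHL : yL < yH)
  (Hgamma : 0 < gamma <= 1)
  (HC0 : C 0 = 0)
  (HCinc : strictly_increasing_on dom01 C)
  (HCconv : strictly_convex_on dom01 C)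
  (HdC : deriv_on dom01 C dC)
  (HddC : deriv_on dom01 dC ddC)
  (HCinf : tends_to_infty_at_1 C)
  (Heta0 : eta 0 = 0)
  (Hetainc : strictly_increasing_on domNN eta)
  (Hetaconv : strictly_convex_on domNN eta)
  (Hdeta : deriv_on domNN eta deta)
  (Hddeta : deriv_on domNN deta ddeta)
  (Hbeta : 0 <= beta) (Hbeta1 : gamma * deta beta = 1) :
  exists astar, dom01 astar /\
    forall a, dom01 a -> g P yH yL u gamma beta C dC eta a
                         <= g P yH yL u gamma beta C dC eta astar.
Proof.
  assert (HdCnn : forall a, dom01 a -> 0 <= dC a).
  { intros a Ha. apply (lim_ge _ _ _ _ 0 (HdC a Ha)).
    intros del Hdel. unfold dom01 in Ha.
    set (x := a + Rmin (del/2) ((1-a)/2)).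
    assert (Hm1 := Rmin_l (del/2) ((1-a)/2)).
    assert (Hm2 := Rmin_r (del/2) ((1-a)/2)).
    assert (Hm3 : 0 < Rmin (del/2) ((1-a)/2)) by (apply Rmin_glb_lt; lra).
    exists x. unfold dom01, x. repeat split; try lra.
    - rewrite Rabs_right; lra.
    - left. apply Rdiv_lt_0_compat; [|lra].
      assert (C a < C (a + Rmin (del / 2) ((1 - a) / 2))); [|lra].
      apply HCinc; unfold dom01; lra. }
  assert (Hetann : forall b, 0 <= b -> 0 <= eta b).
  { intros b Hb. destruct (Req_dec b 0) as [->|]; [lra|].
    rewrite <- Heta0. left; apply Hetainc; unfold domNN; lra. }
  set (G := g P yH yL u gamma beta C dC eta).
  assert (HwL0 : forall a, 0 <= wL u C dC a) by (intros; apply Rmax_l).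
  assert (HwH0 : forall a, dom01 a -> 0 <= wH u C dC a).
  { intros a Ha; unfold wH; generalize (HwL0 a) (HdCnn a Ha); lra. }
  assert (HbL0 : forall a, 0 <= bL beta u C dC a).
  { intros a; unfold bL, Rmin; destruct Rle_dec; auto. }
  assert (HbH0 : forall a, dom01 a -> 0 <= bH beta u C dC a).
  { intros a Ha; unfold bH, Rmin; destruct Rle_dec; auto. }
  set (K := P * yH + beta - u).
  assert (Hbound : forall a, dom01 a -> G a <= K - C a).
  { intros a Ha. unfold G, g.
    assert (E1 := HbH0 a Ha). assert (E2 := HbL0 a).
    assert (E3 := Hetann _ E1). assert (E4 := Hetann _ E2).
    assert (E5 : bH beta u C dC a <= beta) by apply Rmin_l.
    assert (E6 : bL beta u C dC a <= beta) by apply Rmin_l.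
    assert (E7 : u - a * dC a + C a <= wL u C dC a) by apply Rmax_r.
    assert (E8 : wH u C dC a = wL u C dC a + dC a) by reflexivity.
    unfold dom01 in Ha.
    set (X := P * yH - wH u C dC a + bH beta u C dC a - gamma * eta (bH beta u C dC a)).
    set (Y := P * yL - wL u C dC a + bL beta u C dC a - gamma * eta (bL beta u C dC a)).
    assert (EX : X <= P * yH - wH u C dC a + beta).
    { unfold X. assert (0 <= gamma * eta (bH beta u C dC a)) by (apply Rmult_le_pos; lra). lra. }
    assert (EY : Y <= P * yL - wL u C dC a + beta).
    { unfold Y. assert (0 <= gamma * eta (bL beta u C dC a)) by (apply Rmult_le_pos; lra). lra. }
    assert (a * X <= a * (P * yH - wH u C dC a + beta)) by (apply Rmult_le_compat_l; lra).
    assert ((1 - a) * Y <= (1 - a) * (P * yL - wL u C dC a + beta)) by (apply Rmult_le_compat_l; lra).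
    assert (P * yL <= P * yH) by (apply Rmult_le_compat_l; lra).
    assert ((1-a) * (P * yL) <= (1-a) * (P * yH)) by (apply Rmult_le_compat_l; lra).
    unfold K. rewrite E8 in *. nra. }
  assert (Cc : forall a, dom01 a -> limit1_in C dom01 (C a) a)
    by (intros; eapply ctn_of_deriv; eauto).
  assert (dCc : forall a, dom01 a -> limit1_in dC dom01 (dC a) a)
    by (intros; eapply ctn_of_deriv; eauto).
  assert (etac : forall b, domNN b -> limit1_in eta domNN (eta b) b)
    by (intros; eapply ctn_of_deriv; eauto).
  assert (Gc : forall a, dom01 a -> limit1_in G dom01 (G a) a).
  { intros a Ha.
    assert (LwL : limit1_in (wL u C dC) dom01 (wL u C dC a) a).
    { assert (H := lim_max _ _ _ _ _ _ (lim_const dom01 0 a)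
        (limit_plus _ _ _ _ _ _ (limit_minus _ _ _ _ _ _ (lim_const dom01 u a)
           (limit_mul _ _ _ _ _ _ (lim_id dom01 a) (dCc a Ha))) (Cc a Ha))).
      eapply lim_ext; [|exact H]. intros; reflexivity. }
    assert (LwH : limit1_in (wH u C dC) dom01 (wH u C dC a) a).
    { assert (H := limit_plus _ _ _ _ _ _ LwL (dCc a Ha)).
      eapply lim_ext; [|exact H]. intros; reflexivity. }
    assert (LbL : limit1_in (bL beta u C dC) dom01 (bL beta u C dC a) a).
    { assert (H := lim_min _ _ _ _ _ _ (lim_const dom01 beta a) LwL).
      eapply lim_ext; [|exact H]. intros; reflexivity. }
    assert (LbH : limit1_in (bH beta u C dC) dom01 (bH beta u C dC a) a).
    { assert (H := lim_min _ _ _ _ _ _ (lim_const dom01 beta a) LwH).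
      eapply lim_ext; [|exact H]. intros; reflexivity. }
    assert (LeL : limit1_in (fun x => eta (bL beta u C dC x)) dom01 (eta (bL beta u C dC a)) a).
    { assert (H := limit_comp _ _ _ _ _ _ _ LbL (etac _ (HbL0 a))).
      eapply lim_weaken; [|exact H]. intros x Hx; split; auto. apply HbL0. }
    assert (LeH : limit1_in (fun x => eta (bH beta u C dC x)) dom01 (eta (bH beta u C dC a)) a).
    { assert (H := limit_comp _ _ _ _ _ _ _ LbH (etac _ (HbH0 a Ha))).
      eapply lim_weaken; [|exact H]. intros x Hx; split; auto. apply HbH0; auto. }
    set (D := dom01).
    assert (H := limit_plus _ _ _ _ _ _
      (limit_mul _ _ _ _ _ _ (lim_id D a)
         (limit_minus _ _ _ _ _ _ (limit_plus _ _ _ _ _ _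
            (limit_minus _ _ _ _ _ _ (lim_const D (P * yH) a) LwH) LbH)
            (limit_mul _ _ _ _ _ _ (lim_const D gamma a) LeH)))
      (limit_mul _ _ _ _ _ _ (limit_minus _ _ _ _ _ _ (lim_const D 1 a) (lim_id D a))
         (limit_minus _ _ _ _ _ _ (limit_plus _ _ _ _ _ _
            (limit_minus _ _ _ _ _ _ (lim_const D (P * yL) a) LwL) LbL)
            (limit_mul _ _ _ _ _ _ (lim_const D gamma a) LeL)))).
    eapply lim_ext; [|exact H]. intros; reflexivity. }
  destruct (HCinf (K - G 0)) as [d [Hd Hd']].
  set (c := Rmax 0 (1 - d/2)).
  assert (Hc0 : 0 <= c) by apply Rmax_l.
  assert (Hc1 : 1 - d/2 <= c) by apply Rmax_r.
  assert (Hc2 : c < 1).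
  { unfold c, Rmax; destruct Rle_dec; lra. }
  set (cl := fun x => Rmax 0 (Rmin c x)).
  assert (Hcl : forall x, dom01 (cl x)).
  { intros x; unfold cl, dom01, Rmax, Rmin; repeat destruct Rle_dec; lra. }
  assert (Hcl2 : forall x, 0 <= x <= c -> cl x = x).
  { intros x Hx; unfold cl, Rmax, Rmin; repeat destruct Rle_dec; lra. }
  set (h := fun x => G (cl x)).
  assert (Hh : forall x, continuity_pt h x).
  { intros x.
    assert (L1 : limit1_in cl (fun _ => True) (cl x) x).
    { assert (H := lim_max _ _ _ _ _ _ (lim_const (fun _ => True) 0 x)
        (lim_min _ _ _ _ _ _ (lim_const (fun _ => True) c x) (lim_id (fun _ => True) x))).
      eapply lim_ext; [|exact H]. intros; reflexivity. }
    assert (H := limit_comp _ _ _ _ _ _ _ L1 (Gc _ (Hcl x))).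
    unfold continuity_pt, continue_in.
    eapply lim_weaken; [|exact H]. intros y _; split; auto. }
  destruct (continuity_ab_maj h 0 c Hc0 (fun c _ => Hh c)) as [Mx [HMx1 HMx2]].
  exists Mx. split; [unfold dom01; lra|].
  assert (EM : h Mx = G Mx) by (unfold h; rewrite Hcl2; auto).
  intros a Ha. fold G. rewrite <- EM.
  destruct (Rle_or_lt a c) as [Hac|Hac].
  - assert (E := HMx1 a). unfold h in E |- *. rewrite Hcl2 in E; unfold dom01 in Ha; try lra.
  - assert (E0 := HMx1 0). unfold h in E0. rewrite Hcl2 in E0; [|lra].
    assert (E1 := Hbound a Ha). assert (E2 := Hd' a). unfold dom01 in Ha.
    assert (K - G 0 < C a) by (apply E2; lra).
    assert (G 0 <= G (cl Mx)) by (apply E0; lra). unfold h. lra.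
Qed.
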